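(* Let $d\ge2$, let $(c_t)_{t=0}^\infty\subset\mathbb{S}^{d-1}$ be a sequence of unit vectors and let $\omega:\mathsf{P}^d_+\to\mathbb{R}_{\ge0}$ be a function such that $\omega(X)\le C\sqrt{\lambda_{\max}(X)}$ for all $X\in\mathsf{P}^d_+$, for some constant $C>0$. Let $\lambda_0\ge\max\Big\{2,\ \sqrt{\tfrac{2}{3(d-1)}}\,2dC+\tfrac{2}{3(d-1)}\Big\}$ and define matrices $V_t\in\mathbb{R}^{d\times d}$ by $$V_0=\lambda_0\mathbb{I}_{d\times d},\qquad V_{t+1}=V_t+\omega(V_t)\sum_{i=1}^{d-1}P_{t,i},$$ where $P_{t,i}=a^+_{t+1,i}(a^+_{t+1,i})^{\mathsf T}+a^-_{t+1,i}(a^-_{t+1,i})^{\mathsf T}$, $a^\pm_{t+1,i}=\tilde a^\pm_{t+1,i}/\|\tilde a^\pm_{t+1,i}\|_2$, $\tilde a^\pm_{t+1,i}=c_t\pm\frac{1}{\sqrt{\lambda_{t,1}}}v_{t,i}$, and $\lambda_{t,1}\le\lambda_{t,2}\le\dots\le\lambda_{t,d}$ are the eigenvalues of $V_t$ with corresponding orthonormal eigenvectors $v_{t,1},\dots,v_{t,d}$. Then $$\lambda_{\min}(V_t)\ge\sqrt{\frac{2}{3(d-1)}\lambda_{\max}(V_t)}\qquad\text{for all }t\ge0.$$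
   Context: $\mathsf{P}^d_+$ is the set of real positive semidefinite $d\times d$ matrices; $\lambda_{\min}$, $\lambda_{\max}$ denote minimal and maximal eigenvalue; $\mathbb{S}^{d-1}$ is the unit sphere of $\mathbb{R}^d$. *)

(* Defs.v *)
From HB Require Import structures.
From mathcomp Require Import all_boot all_order all_algebra.
From mathcomp Require Import boolp classical_sets reals.
Set Implicit Arguments. Unset Strict Implicit. Unset Printing Implicit Defensive.
Import Order.TTheory GRing.Theory Num.Theory.
Local Open Scope ring_scope.
Local Open Scope classical_set_scope.

Definition psd (R : realType) (d : nat) (X : 'M[R]_d) : Prop :=
  X^T = X /\ forall v : 'cV[R]_d, 0 <= (v^T *m X *m v) 0 0.

Definition lambda_min (R : realType) (d : nat) (X : 'M[R]_d) : R :=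
  inf [set a : R | eigenvalue X a].
Definition lambda_max (R : realType) (d : nat) (X : 'M[R]_d) : R :=
  sup [set a : R | eigenvalue X a].

Definition norm2 (R : realType) (d : nat) (v : 'cV[R]_d) : R :=
  Num.sqrt ((v^T *m v) 0 0).

Definition proj_normalized (R : realType) (d : nat) (at_ : 'cV[R]_d) : 'M[R]_d :=
  let a := (norm2 at_)^-1 *: at_ in a *m a^T.

(* Main.v *)
Require Import Defs.
From HB Require Import structures.
From mathcomp Require Import all_boot all_order all_algebra.
From mathcomp Require Import boolp classical_sets reals.
Import Order.TTheory GRing.Theory Num.Theory.
Local Open Scope ring_scope.
From mathcomp Require Import ring lra.

Set Implicit Arguments. Unset Strict Implicit. Unset Printing Implicit Defensive.

Section Dot.
Variables (R : realType) (n : nat).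
Implicit Types (u w x : 'cV[R]_n).

Definition dot u w := (u^T *m w) 0 0.

Lemma dotE u w : dot u w = \sum_i u i 0 * w i 0.
Proof. by rewrite /dot mxE; apply: eq_bigr => i _; rewrite mxE. Qed.

Lemma dotC u w : dot u w = dot w u.
Proof. by rewrite !dotE; apply: eq_bigr => i _; rewrite mulrC. Qed.

Lemma dotDr u w x : dot u (w + x) = dot u w + dot u x.
Proof. by rewrite !dotE -big_split; apply: eq_bigr => i _; rewrite mxE mulrDr. Qed.

Lemma dotZr a u w : dot u (a *: w) = a * dot u w.
Proof. by rewrite !dotE mulr_sumr; apply: eq_bigr => i _; rewrite mxE mulrCA. Qed.

Lemma dotNr u w : dot u (- w) = - dot u w.
Proof. by rewrite -scaleN1r dotZr mulN1r. Qed.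

Lemma dotBr u w x : dot u (w - x) = dot u w - dot u x.
Proof. by rewrite dotDr dotNr. Qed.

Lemma dotDl u w x : dot (w + x) u = dot w u + dot x u.
Proof. by rewrite dotC dotDr !(dotC u). Qed.

Lemma dotZl a u w : dot (a *: w) u = a * dot w u.
Proof. by rewrite dotC dotZr dotC. Qed.

Lemma dotBl u w x : dot (w - x) u = dot w u - dot x u.
Proof. by rewrite dotC dotBr !(dotC u). Qed.

Lemma dot_sumr I (r : seq I) (P : pred I) (F : I -> 'cV[R]_n) u :
  dot u (\sum_(i <- r | P i) F i) = \sum_(i <- r | P i) dot u (F i).
Proof.
elim/big_rec2: _ => [|i y1 y2 _ <-]; first by rewrite !dotE big1 // => i _; rewrite mxE mulr0.
by rewrite dotDr.
Qed.

Lemma dot_ge0 u : 0 <= dot u u.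
Proof. by rewrite dotE sumr_ge0 // => i _; rewrite -expr2 sqr_ge0. Qed.

Lemma dot_eq0 u : dot u u = 0 -> u = 0.
Proof.
rewrite dotE => /eqP; rewrite psumr_eq0 => [/allP H|i _]; last by rewrite -expr2 sqr_ge0.
apply/matrixP => i j; rewrite (ord1 j) mxE.
have := H i (mem_index_enum _); rewrite /= mulf_eq0 orbb => /eqP //.
Qed.

Lemma dot0r u : dot u 0 = 0.
Proof. by rewrite dotE big1 // => i _; rewrite mxE mulr0. Qed.

Lemma CS u w : dot u w ^+ 2 <= dot u u * dot w w.
Proof.
have [/dot_eq0 ->|bn0] := eqVneq (dot w w) 0.
  by rewrite dot0r expr0n /= dot0r mulr0.
have b0 : 0 < dot w w by rewrite lt_def bn0 dot_ge0.
have := dot_ge0 (dot w w *: u - dot u w *: w).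
rewrite !(dotBl, dotBr, dotZl, dotZr) (dotC w u).
set a := dot u w; set b := dot w w; set e := dot u u => H.
have : 0 <= b * (b * e - a ^+ 2).
  by apply: le_trans H _; rewrite le_eqVlt; apply/orP; left; apply/eqP; ring.
by rewrite pmulr_rge0 // subr_ge0 mulrC.
Qed.
End Dot.

Section Spec.
Variables (R : realType) (d : nat) (V : 'M[R]_d) (lam : nat -> R) (vec : nat -> 'cV[R]_d).
Hypothesis d0 : (0 < d)%N.
Hypothesis heig : forall i, (i < d)%N -> V *m vec i = lam i *: vec i.
Hypothesis horth : forall i j, (i < d)%N -> (j < d)%N -> dot (vec i) (vec j) = (i == j)%:R.
Hypothesis hord : forall i j, (i <= j)%N -> (j < d)%N -> lam i <= lam j.

Lemma decomp x : x = \sum_(0 <= j < d) dot (vec j) x *: vec j.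
Proof.
set Q := \matrix_(a < d, j < d) vec j a 0.
have QtQ : Q^T *m Q = 1%:M.
  apply/matrixP => i j; rewrite mxE [RHS]mxE.
  rewrite (_ : (i == j) = (i == j :> nat)) // -horth // dotE; apply: eq_bigr => a _; rewrite !mxE //.
have QQt := mulmx1C QtQ.
have -> : \sum_(0 <= j < d) dot (vec j) x *: vec j = Q *m (Q^T *m x).
  apply/matrixP => a b; rewrite summxE big_mkord mxE; apply: eq_bigr => j _.
  rewrite !mxE mulrC (ord1 b); congr (_ * _); rewrite dotE; apply: eq_bigr => k _.
  by rewrite !mxE.
by rewrite mulmxA QQt mul1mx.
Qed.

Let beta x j := dot (vec j) x.

Lemma parseval x : dot x x = \sum_(0 <= j < d) beta x j ^+ 2.
Proof.
rewrite {2}(decomp x) dot_sumr; apply: eq_bigr => j _.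
by rewrite dotZr (dotC x) expr2.
Qed.

Lemma quadV x : dot x (V *m x) = \sum_(0 <= j < d) lam j * beta x j ^+ 2.
Proof.
rewrite {2}(decomp x) mulmx_sumr dot_sumr; apply: eq_big_nat => j /andP[_ jd].
by rewrite -scalemxAr heig // scalerA dotZr (dotC x) /beta; ring.
Qed.

Lemma sum_split (F : nat -> R) : \sum_(0 <= j < d) F j = \sum_(0 <= j < d.-1) F j + F d.-1.
Proof. by rewrite -{1}(prednK d0) big_nat_recr. Qed.

Lemma quad_lower x :
  lam 0 * (dot x x - beta x d.-1 ^+ 2) + lam d.-1 * beta x d.-1 ^+ 2 <= dot x (V *m x).
Proof.
rewrite quadV parseval !sum_split addrK lerD2r mulr_sumr.
apply: ler_sum_nat => j /andP[_ jd]; apply: ler_wpM2r; first exact: sqr_ge0.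
apply: hord => //; exact: (leq_trans jd (leq_pred d)).
Qed.

Lemma quad_upper x : dot x (V *m x) <= lam d.-1 * dot x x.
Proof.
rewrite quadV parseval mulr_sumr; apply: ler_sum_nat => j /andP[_ jd].
apply: ler_wpM2r; first exact: sqr_ge0.
apply: hord => //; last by rewrite prednK.
by rewrite -ltnS prednK.
Qed.

Lemma beta_le x : beta x d.-1 ^+ 2 <= dot x x.
Proof.
rewrite parseval sum_split lerDr sumr_ge0 // => j _; exact: sqr_ge0.
Qed.

Hypothesis hsym : V^T = V.

Lemma vec_neq0 i : (i < d)%N -> vec i != 0.
Proof.
move=> id; apply/eqP => h; have := horth id id; rewrite h dot0r eqxx => /eqP.
by rewrite eq_sym oner_eq0.
Qed.

Lemma eig_range a : eigenvalue V a -> lam 0 <= a <= lam d.-1.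
Proof.
case/eigenvalueP => v hv vn0.
set x := v^T.
have Vx : V *m x = a *: x by rewrite /x -{1}hsym -trmx_mul hv linearZ.
have xn0 : x != 0 by apply: contraNneq vn0 => h; rewrite -(trmxK v) -/x h linear0.
have e0 : 0 < dot x x.
  by rewrite lt_def dot_ge0 andbT; apply/eqP => /dot_eq0 h; rewrite h eqxx in xn0.
have Hl := quad_lower x; have Hu := quad_upper x; have Hb := beta_le x.
have hm : lam 0 <= lam d.-1 by apply: hord => //; rewrite prednK.
rewrite Vx dotZr in Hl Hu.
apply/andP; split.
  rewrite -(ler_pM2r e0); apply: le_trans Hl.
  have := sqr_ge0 (beta x d.-1); nra.
by rewrite -(ler_pM2r e0).
Qed.

Lemma eig_lam0 : eigenvalue V (lam 0).
Proof.
apply/eigenvalueP; exists (vec 0)^T.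
  by rewrite -{1}hsym -trmx_mul heig // linearZ.
apply/eqP => h; have := vec_neq0 d0; by rewrite -(trmxK (vec 0)) h linear0 eqxx.
Qed.

Lemma lmax_le : lambda_max V <= lam d.-1.
Proof.
apply: ge_sup; first by exists (lam 0); exact: eig_lam0.
by move=> a /eig_range /andP[].
Qed.

Lemma lmin_ge : lam 0 <= lambda_min V.
Proof.
apply: lb_le_inf; first by exists (lam 0); exact: eig_lam0.
by move=> a /eig_range /andP[].
Qed.

End Spec.

Lemma arith (R : realType) (D k r mu M om C l0 s mu' M' b m : R) :
  2 <= D -> k * (3 * (D - 1)) = 2 -> 0 <= r -> r ^+ 2 = k -> 0 < C ->
  2 <= l0 -> r * 2 * D * C + k <= l0 -> l0 <= mu -> mu <= M -> k * M <= mu ^+ 2 ->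
  0 <= om -> 0 <= m -> m ^+ 2 = M -> om <= C * m -> 0 <= s -> s ^+ 2 * mu = 1 ->
  0 <= b -> b <= 1 ->
  mu * (1 - b) + M * b + om * (2 * s ^+ 2 / (1 + s) ^+ 2 * (1 - b)) <= mu' ->
  M' <= M + om * (2 * (D - 1)) ->
  l0 <= mu' /\ k * M' <= mu' ^+ 2.
Proof.
move=> D2 hk r0 hr C0 l02 hl lmu muM kM om0 m0 hm omC s0 hs b0 b1 h1 h2.
set g := 2 * s ^+ 2 / (1 + s) ^+ 2.
rewrite -/g in h1.
have s1 : 0 < (1 + s) ^+ 2 by apply: exprn_gt0; lra.
have g0 : 0 <= g by rewrite /g; apply: divr_ge0; [have := sqr_ge0 s; lra | exact: ltW].
have mug : mu * g = 2 / (1 + s) ^+ 2.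
  have e : mu * (2 * s ^+ 2 / (1 + s) ^+ 2) = 2 * (s ^+ 2 * mu) / (1 + s) ^+ 2 by ring.
  by rewrite /g e hs mulr1.
have s3 : (1 + s) ^+ 2 <= 3.
  have : s ^+ 2 <= 1 / 2.
    have : s ^+ 2 * 2 <= 1 by rewrite -hs; apply: ler_wpM2l; [exact: sqr_ge0| lra].
    lra.
  move=> hs2; have : s <= 3 / 4 by nra.
  move=> hs3; rewrite sqrrD expr1n; lra.
have k43 : k * (2 * (D - 1)) = 4 / 3.
  have e : k * (2 * (D - 1)) = 2 / 3 * (k * (3 * (D - 1))) by field.
  by rewrite e hk; field.
have hM' : k * M' <= k * M + 4 / 3 * om.
  have k0 : 0 <= k by rewrite -hr sqr_ge0.
  apply: le_trans (ler_wpM2l k0 h2) _; rewrite mulrDr mulrCA k43; lra.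
have hA : mu + om * g <= mu' \/ M <= mu'.
  have [hc|hc] := lerP (mu + om * g) M.
    left; apply: le_trans h1.
    have := mulr_ge0 b0 (_ : 0 <= M - (mu + om * g)) => /(_ ltac:(lra)).
    lra.
  right; apply: le_trans h1.
  have := mulr_ge0 (_ : 0 <= 1 - b) (_ : 0 <= (mu + om * g) - M) => /(_ ltac:(lra) ltac:(lra)).
  lra.
have omg0 : 0 <= om * g by rewrite mulr_ge0.
case: hA => hA.
  split; first lra.
  apply: (le_trans hM'); apply: le_trans (_ : (mu + om * g) ^+ 2 <= _); last first.
    by rewrite ler_pXn2r // ?nnegrE; lra.
  have : 4 / 3 * om <= 2 * (mu * g) * om.
    rewrite mug; apply: ler_wpM2r => //.
    rewrite mulrA ler_pdivlMr // ?ler_pdivrMl; lra.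
  have : 0 <= (om * g) ^+ 2 by exact: sqr_ge0.
  rewrite sqrrD; nra.
split; first lra.
apply: (le_trans hM'); apply: le_trans (_ : M ^+ 2 <= _); last first.
  by rewrite ler_pXn2r // ?nnegrE; lra.
have e1 : m * 2 * D * r >= 4 / 3.
  have h0 : 0 <= m * 2 * D * r by rewrite !mulr_ge0 //; lra.
  have : (4 / 3) ^+ 2 <= (m * 2 * D * r) ^+ 2.
    rewrite !exprMn hm hr.
    have : 2 <= M by lra.
    have D1 : 0 < 3 * (D - 1) by lra.
    have : 16 / 9 * (3 * (D - 1)) <= 2 ^+ 2 * D ^+ 2 * 2 * 2 by nra.
    move=> H3 H4; rewrite -(ler_pM2r D1).
    have -> : M ^+ 1 * 2 ^+ 2 * D ^+ 2 * k * (3 * (D - 1)) = M * 2 ^+ 2 * D ^+ 2 * 2.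
      by rewrite -mulrA hk expr1.
    nra.
  move=> H; rewrite -ler_sqr // ?nnegrE //; lra.
have e2 : M * (M - k) >= M * (2 * D * r * C) by apply: ler_wpM2l; lra.
have e3 : m ^+ 2 * (2 * D * r * C) >= 4 / 3 * om.
  have : 4 / 3 * om <= 4 / 3 * (C * m) by apply: ler_wpM2l; lra.
  have : 0 <= C * m by rewrite mulr_ge0 // ltW.
  nra.
rewrite hm in e3; nra.
Qed.

Section Proj.
Variables (R : realType) (n : nat).
Implicit Types (u w x : 'cV[R]_n).

Lemma mul_1x1 (a : 'cV[R]_n) (M : 'M[R]_1) : a *m M = M 0 0 *: a.
Proof.
apply/matrixP => i j; rewrite !mxE big_ord1 (ord1 j) mulrC //.
Qed.

Lemma q_proj w x : dot x (proj_normalized w *m x) = dot x w ^+ 2 / dot w w.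
Proof.
rewrite /proj_normalized -mulmxA mul_1x1 -/(dot _ x) dotZr.
rewrite -/(dot _ _) !(dotZl, dotZr) (dotC w x).
have -> : norm2 w = Num.sqrt (dot w w) by [].
have h := dot_ge0 w.
set q := Num.sqrt (dot w w). have hq : dot w w = q ^+ 2 by rewrite sqr_sqrtr.
rewrite [X in _ / X]hq -exprVn; ring.
Qed.


Lemma q_proj_le w x : dot x (proj_normalized w *m x) <= dot x x.
Proof.
rewrite q_proj; have [->|bn0] := eqVneq (dot w w) 0; first by rewrite invr0 mulr0 dot_ge0.
have b0 : 0 < dot w w by rewrite lt_def bn0 dot_ge0.
by rewrite ler_pdivrMr // CS.
Qed.

Lemma q_proj_ge w x s : dot w w <= s -> 0 < s ->
  dot x w ^+ 2 / s <= dot x (proj_normalized w *m x).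
Proof.
move=> ws s0; rewrite q_proj; have [b0|bn0] := eqVneq (dot w w) 0.
  have := CS x w; rewrite b0 mulr0 => h.
  have h2 : dot x w ^+ 2 = 0 by apply/eqP; rewrite eq_le h sqr_ge0.
  by rewrite h2 !mul0r.
have b0 : 0 < dot w w by rewrite lt_def bn0 dot_ge0.
by apply: ler_wpM2l; [exact: sqr_ge0 | rewrite lef_pV2 ?posrE].
Qed.

Lemma qD (A B : 'M[R]_n) x : dot x ((A + B) *m x) = dot x (A *m x) + dot x (B *m x).
Proof. by rewrite mulmxDl dotDr. Qed.

Lemma qZ a (A : 'M[R]_n) x : dot x ((a *: A) *m x) = a * dot x (A *m x).
Proof. by rewrite -scalemxAl dotZr. Qed.

Lemma qsum I (r : seq I) (P : pred I) (F : I -> 'M[R]_n) x :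
  dot x ((\sum_(i <- r | P i) F i) *m x) = \sum_(i <- r | P i) dot x (F i *m x).
Proof. by rewrite mulmx_suml dot_sumr. Qed.

Lemma proj_sym w : (proj_normalized w)^T = proj_normalized w.
Proof. by rewrite /proj_normalized trmx_mul trmxK. Qed.

Variables (c v : 'cV[R]_n) (s : R).
Hypotheses (hc : dot c c = 1) (hv : dot v v = 1) (s0 : 0 <= s).

Lemma pair_le x : dot x ((proj_normalized (c + s *: v) + proj_normalized (c - s *: v)) *m x)
   <= 2 * dot x x.
Proof. by rewrite qD mulr2n mulrDl mul1r lerD // q_proj_le. Qed.

Lemma pair_ge x : 2 * s ^+ 2 / (1 + s) ^+ 2 * dot x v ^+ 2 <=
   dot x ((proj_normalized (c + s *: v) + proj_normalized (c - s *: v)) *m x).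
Proof.
have hcv : dot c v ^+ 2 <= 1 by have := CS c v; rewrite hc hv mulr1.
have s0' := s0.
have Q0 : 0 < (1 + s) ^+ 2 by apply: exprn_gt0; lra.
have cv1 : dot c v <= 1 by nra.
have cv2 : -1 <= dot c v by nra.
have p1 := mulr_ge0 s0 (ltac:(lra) : 0 <= 1 - dot c v).
have p2 := mulr_ge0 s0 (ltac:(lra) : 0 <= 1 + dot c v).
have np : dot (c + s *: v) (c + s *: v) <= (1 + s) ^+ 2.
  rewrite !(dotDl, dotDr, dotZl, dotZr) hc hv (dotC v c); rewrite sqrrD expr1n; nra.
have nm : dot (c - s *: v) (c - s *: v) <= (1 + s) ^+ 2.
  rewrite !(dotBl, dotBr, dotZl, dotZr) hc hv (dotC v c); rewrite sqrrD expr1n; nra.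
rewrite qD; apply: (le_trans _ (lerD (q_proj_ge x np Q0) (q_proj_ge x nm Q0))).
rewrite -mulrDl dotDr dotBr !dotZr.
rewrite mulrAC; apply: ler_wpM2r; first by rewrite invr_ge0 ltW.
have := sqr_ge0 (dot x c); set a := dot x c; set b := dot x v; nra.
Qed.
End Proj.

Unset Implicit Arguments. Set Strict Implicit.

Theorem mainTheorem3 (R : realType) (d : nat) (hd : (2 <= d)%N)
  (c : nat -> 'cV[R]_d) (omega : 'M[R]_d -> R) (C lambda0 : R)
  (V : nat -> 'M[R]_d) (lam : nat -> nat -> R) (vec : nat -> nat -> 'cV[R]_d) :
  (forall t, norm2 (c t) = 1) ->
  0 < C ->
  (forall X : 'M[R]_d, psd X -> 0 <= omega X /\ omega X <= C * Num.sqrt (lambda_max X)) ->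
  2 <= lambda0 ->
  Num.sqrt (2 / (3 * (d%:R - 1))) * 2 * d%:R * C + 2 / (3 * (d%:R - 1)) <= lambda0 ->
  V 0%N = lambda0%:M ->
  (* (lam t i, vec t i), i < d, are the eigenvalues of V t in increasing order
     with corresponding orthonormal eigenvectors (0-based indexing) *)
  (forall t i, (i < d)%N -> V t *m vec t i = lam t i *: vec t i) ->
  (forall t i j, (i < d)%N -> (j < d)%N ->
      ((vec t i)^T *m vec t j) 0 0 = (i == j)%:R) ->
  (forall t i j, (i <= j)%N -> (j < d)%N -> lam t i <= lam t j) ->
  (forall t, V t.+1 = V t + omega (V t) *:
      \sum_(0 <= i < d.-1)
        (proj_normalized (c t + (Num.sqrt (lam t 0%N))^-1 *: vec t i)
         + proj_normalized (c t - (Num.sqrt (lam t 0%N))^-1 *: vec t i))) ->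
  forall t, Num.sqrt (2 / (3 * (d%:R - 1)) * lambda_max (V t)) <= lambda_min (V t).
Proof.
move=> hc C0 hom l02 hl V0 heig horth hord hV.
have d0 : (0 < d)%N by apply: leq_trans hd.
have horth' : forall t i j, (i < d)%N -> (j < d)%N -> dot (vec t i) (vec t j) = (i == j)%:R.
  exact: horth.
have hc' : forall t, dot (c t) (c t) = 1.
  move=> t; have := hc t; rewrite /norm2 -/(dot _ _) => h.
  by rewrite -(sqr_sqrtr (dot_ge0 (c t))) h expr1n.
have D2 : 2 <= d%:R :> R by rewrite ler_nat.
set D := d%:R : R in D2 hl *.
set k := 2 / (3 * (D - 1)) in hl *.
have hk : k * (3 * (D - 1)) = 2 by rewrite /k mulfVK //; lra.
have k0 : 0 <= k by rewrite /k divr_ge0 //; lra.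
have k1 : k <= 1 by rewrite /k ler_pdivrMr; lra.
have hsym : forall t, (V t)^T = V t.
  elim=> [|t IH]; first by rewrite V0 tr_scalar_mx.
  rewrite hV linearD linearZ /= IH linear_sum /=; congr (_ + _ *: _).
  by apply: eq_bigr => i _; rewrite linearD /= !proj_sym.
have lamq : forall t i, (i < d)%N -> lam t i = dot (vec t i) (V t *m vec t i).
  by move=> t i id; rewrite heig // dotZr horth' // eqxx mulr1.
have dm1 : (d.-1 < d)%N by rewrite prednK.
have Inv : forall t, lambda0 <= lam t 0 /\ k * lam t d.-1 <= lam t 0 ^+ 2.
  elim=> [|t [IH1 IH2]].
    have l0i : forall i, (i < d)%N -> lam 0 i = lambda0.
      by move=> i id; rewrite lamq // V0 mul_scalar_mx dotZr horth' // eqxx mulr1.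
    rewrite !l0i //; split=> //; nra.
  have hql := quad_lower d0 (heig t) (horth' t) (hord t).
  have hqu := quad_upper d0 (heig t) (horth' t) (hord t).
  have hbl := beta_le d0 (horth' t).
  have muM := hord t 0 d.-1 isT dm1.
  set mu := lam t 0 in IH1 IH2 hql hqu muM *; set M := lam t d.-1 in IH2 hql hqu muM *.
  have psdV : psd (V t).
    split; first exact: hsym t.
    move=> x; rewrite -mulmxA -/(dot x _); apply: le_trans (hql x).
    have := hbl x; have := sqr_ge0 (dot (vec t d.-1) x); have := dot_ge0 x.
    nra.
  have [om0 omC] := hom _ psdV.
  have omC' : omega (V t) <= C * Num.sqrt M.
    apply: le_trans omC (ler_wpM2l (ltW C0) (ler_wsqrtr _)).
    exact: lmax_le d0 (heig t) (horth' t) (hord t) (hsym t).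
  have mu0 : 0 < mu by lra.
  have M0 : 0 <= M by lra.
  set s := (Num.sqrt mu)^-1.
  have s0 : 0 <= s by rewrite invr_ge0 sqrtr_ge0.
  have hs : s ^+ 2 * mu = 1 by rewrite exprVn sqr_sqrtr ?mulVf ?gt_eqF //; lra.
  have hvv : forall i, (i < d.-1)%N -> dot (vec t i) (vec t i) = 1.
    by move=> i id; rewrite horth' ?eqxx // (leq_trans id) // leq_pred.
  have qP : forall x, dot x (V t.+1 *m x) = dot x (V t *m x) + omega (V t) *
      \sum_(0 <= i < d.-1) dot x ((proj_normalized (c t + s *: vec t i)
         + proj_normalized (c t - s *: vec t i)) *m x).
    by move=> x; rewrite hV qD qZ qsum.
  set x := vec t.+1 0.
  have xx : dot x x = 1 by rewrite horth'.
  set b := dot (vec t d.-1) x ^+ 2.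
  have b0 : 0 <= b by exact: sqr_ge0.
  have b1 : b <= 1 by rewrite -xx; exact: hbl.
  have sumb : \sum_(0 <= i < d.-1) dot x (vec t i) ^+ 2 = 1 - b.
    have := parseval (horth' t) x; rewrite xx (sum_split d0) => ->.
    rewrite addrK; apply: eq_bigr => i _; by rewrite dotC.
  have h1 : mu * (1 - b) + M * b + omega (V t) * (2 * s ^+ 2 / (1 + s) ^+ 2 * (1 - b))
      <= lam t.+1 0.
    rewrite lamq // -/x qP; apply: lerD.
      by have := hql x; rewrite xx.
    apply: ler_wpM2l => //; rewrite -sumb mulr_sumr.
    apply: ler_sum_nat => i /andP[_ id].
    exact: pair_ge (hc' t) (hvv i id) s0 x.
  set y := vec t.+1 d.-1.
  have yy : dot y y = 1 by rewrite horth' ?eqxx.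
  have h2 : lam t.+1 d.-1 <= M + omega (V t) * (2 * (D - 1)).
    rewrite lamq // -/y qP; apply: lerD.
      by have := hqu y; rewrite yy mulr1.
    apply: ler_wpM2l => //.
    have -> : 2 * (D - 1) = \sum_(0 <= i < d.-1) 2 * dot y y.
      have Dm1 : D - 1 = (d.-1)%:R by rewrite /D -{1}(prednK d0) mulrSr addrK.
      by rewrite yy mulr1 sumr_const_nat subn0 Dm1 mulr_natr.
    apply: ler_sum_nat => i /andP[_ id].
    exact: pair_le.
  have := arith D2 hk (sqrtr_ge0 k) (sqr_sqrtr k0) C0 l02 hl IH1 muM IH2 om0
    (sqrtr_ge0 M) (sqr_sqrtr M0) omC' s0 hs b0 b1 h1 h2.
  by [].
move=> t; have [I1 I2] := Inv t.
have hM := lmax_le d0 (heig t) (horth' t) (hord t) (hsym t).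
have hm := lmin_ge d0 (heig t) (horth' t) (hord t) (hsym t).
apply: le_trans hm; apply: le_trans (ler_wsqrtr (ler_wpM2l k0 hM)) _.
rewrite -(ler_sqr (sqrtr_ge0 _)) ?nnegrE; last lra.
rewrite sqr_sqrtr //; apply: mulr_ge0 => //.
have := hord t 0 d.-1 isT dm1; lra.
Qed.
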